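(* Let $\bm{L}\in\mathbb{R}^{m\times n}$ have rank $r$ and compact SVD $\bm{L}=\bm{W}_{\bm{L}}\bm{\Sigma}_{\bm{L}}\bm{V}_{\bm{L}}^T$, and suppose $\max_{i}\|\bm{W}_{\bm{L}}^T\bm{e}_i\|_2\leq\sqrt{\mu_1(\bm{L}) r/m}$ and $\max_{i}\|\bm{V}_{\bm{L}}^T\bm{e}_i\|_2\leq\sqrt{\mu_2(\bm{L}) r/n}$. Then for any $J\subseteq[n]$, the matrix $\bm{C}=\bm{L}(:,J)$, with compact SVD $\bm{C}=\bm{W}_{\bm{C}}\bm{\Sigma}_{\bm{C}}\bm{V}_{\bm{C}}^T$, satisfies \[\max_i\|\bm{V}_{\bm{C}}^T\bm{e}_i\|_2\leq\kappa(\bm{L})\,\frac{\|\bm{C}^\dagger\|_2}{\|\bm{L}^\dagger\|_2}\sqrt{\frac{\mu_2(\bm{L}) r}{n}}.\]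
   Context: $[n]=\{1,\dots,n\}$; $\bm{L}(:,J)$ is the column submatrix with column indices in $J$; $\bm{A}^\dagger$ is the Moore–Penrose pseudoinverse; $\kappa(\bm{A})=\|\bm{A}\|_2\|\bm{A}^\dagger\|_2=\sigma_{\max}(\bm{A})/\sigma_{\min}(\bm{A})$ with $\sigma_{\min}$ the smallest nonzero singular value. *)

(* Defs.v *)
From HB Require Import structures.
From mathcomp Require Import all_boot all_order all_algebra.
From mathcomp Require Import classical_sets reals.
Set Implicit Arguments. Unset Strict Implicit. Unset Printing Implicit Defensive.
Import Order.TTheory GRing.Theory Num.Theory.
Local Open Scope ring_scope.
Local Open Scope classical_set_scope.

Section Defs.
Context {R : realType}.

Definition norm2 p (x : 'cV[R]_p) : R := Num.sqrt (\sum_(i < p) x i 0 ^+ 2).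

Definition evec p (i : 'I_p) : 'cV[R]_p := delta_mx i 0.

Definition specnorm p q (A : 'M[R]_(p, q)) : R :=
  sup [set norm2 (A *m x) | x in [set x : 'cV[R]_q | norm2 x <= 1]].

Definition is_pinv p q (A : 'M[R]_(p, q)) (X : 'M[R]_(q, p)) : Prop :=
  [/\ A *m X *m A = A, X *m A *m X = X,
      (A *m X)^T = A *m X & (X *m A)^T = X *m A].

Definition kappa p q (A : 'M[R]_(p, q)) (Ad : 'M[R]_(q, p)) : R :=
  specnorm A * specnorm Ad.

Definition compact_svd p q k (A : 'M[R]_(p, q))
    (W : 'M[R]_(p, k)) (s : 'rV[R]_k) (V : 'M[R]_(q, k)) : Prop :=
  [/\ W^T *m W = 1%:M, V^T *m V = 1%:M,
      (forall i, 0 < s 0 i),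
      (forall i j : 'I_k, (i <= j)%N -> s 0 j <= s 0 i)
    & A = W *m diag_mx s *m V^T].

(* Column submatrix L(:, J), columns taken in increasing index order. *)
Definition colsubset p q (L : 'M[R]_(p, q)) (J : {set 'I_q}) : 'M[R]_(p, #|J|) :=
  colsub (fun k : 'I_#|J| => enum_val k) L.

End Defs.

(* Main.v *)
Require Import Defs.
From HB Require Import structures.
From mathcomp Require Import all_boot all_order all_algebra.
From mathcomp Require Import classical_sets reals.
Import Order.TTheory GRing.Theory Num.Theory.
Set Implicit Arguments. Unset Strict Implicit.
Local Open Scope ring_scope.

Section Helpers.
Variable R : realType.

Lemma norm2E p (x : 'cV[R]_p) : norm2 x = Num.sqrt ((x^T *m x) 0 0).
Proof. rewrite /norm2 mxE; congr Num.sqrt; apply: eq_bigr => i _; by rewrite !mxE expr2. Qed.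

Lemma norm2_ge0 p (x : 'cV[R]_p) : 0 <= norm2 x.
Proof. exact: sqrtr_ge0. Qed.

Lemma norm2_iso p k (V : 'M[R]_(p, k)) y : V^T *m V = 1%:M -> norm2 (V *m y) = norm2 y.
Proof. by move=> H; rewrite !norm2E trmx_mul -mulmxA (mulmxA V^T) H mul1mx. Qed.

Lemma norm2Z p c (x : 'cV[R]_p) : norm2 (c *: x) = `|c| * norm2 x.
Proof.
rewrite /norm2 -sqrtr_sqr -sqrtrM ?sqr_ge0 // mulr_sumr; congr Num.sqrt.
by apply: eq_bigr => i _; rewrite !mxE exprMn.
Qed.

Lemma norm2_0 p : norm2 (0 : 'cV[R]_p) = 0.
Proof. by rewrite /norm2 big1 ?sqrtr0 // => i _; rewrite mxE expr0n. Qed.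

Lemma norm2_eq0 p (x : 'cV[R]_p) : norm2 x = 0 -> x = 0.
Proof.
move=> /eqP; rewrite sqrtr_eq0 => H.
have H0 : \sum_(i < p) x i 0 ^+ 2 = 0.
  by apply/eqP; rewrite eq_le H sumr_ge0 // => i _; rewrite sqr_ge0.
apply/matrixP => i j; rewrite (ord1 j) mxE.
have := psumr_eq0P (fun i _ => sqr_ge0 (x i 0)) H0 (i := i) isT.
by move/eqP; rewrite sqrf_eq0 => /eqP.
Qed.

Lemma coord_le p (x : 'cV[R]_p) j : `|x j 0| <= norm2 x.
Proof.
rewrite /norm2 -sqrtr_sqr ler_wsqrtr // (bigD1 j) //= lerDl.
by apply: sumr_ge0 => i _; rewrite sqr_ge0.
Qed.

Lemma specnorm_bnd p q (A : 'M[R]_(p, q)) :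
  has_ubound [set norm2 (A *m x) | x in [set x : 'cV[R]_q | norm2 x <= 1]].
Proof.
exists (Num.sqrt (\sum_(i < p) (\sum_(j < q) `|A i j|) ^+ 2)).
move=> _ [x /= Hx <-]; rewrite /norm2 ler_wsqrtr // ler_sum // => i _.
have Hi : `|(A *m x) i 0| <= \sum_(j < q) `|A i j|.
  rewrite mxE; apply: (le_trans (ler_norm_sum _ _ _)).
  apply: ler_sum => j _; rewrite normrM -[X in _ <= X]mulr1 ler_wpM2l //.
  exact: le_trans (coord_le x j) Hx.
rewrite -real_normK ?num_real // !expr2 ler_pM //.
Qed.

Lemma specnorm_ge0 p q (A : 'M[R]_(p, q)) : 0 <= specnorm A.
Proof.
apply: (ub_le_sup (specnorm_bnd A)); exists 0; rewrite /= ?mulmx0 ?norm2_0 //.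
Qed.

Lemma specnorm_ub p q (A : 'M[R]_(p, q)) x : norm2 (A *m x) <= specnorm A * norm2 x.
Proof.
have [x0|nz] := eqVneq (norm2 x) 0.
  by rewrite (norm2_eq0 x0) mulmx0 !norm2_0 mulr0.
have tp : 0 < norm2 x by rewrite lt_neqAle eq_sym nz norm2_ge0.
set y := (norm2 x)^-1 *: x.
have ny : norm2 y = 1 by rewrite /y norm2Z ger0_norm ?invr_ge0 ?norm2_ge0 // mulVf.
have Hy : norm2 (A *m y) <= specnorm A.
  apply: (ub_le_sup (specnorm_bnd A)); by exists y => //=; rewrite ny.
have -> : norm2 (A *m x) = norm2 x * norm2 (A *m y).
  by rewrite /y -scalemxAr norm2Z ger0_norm ?invr_ge0 ?norm2_ge0 // mulrA mulfV // mul1r.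
by rewrite mulrC ler_pM2r.
Qed.

End Helpers.

Theorem lemma4p2 (R : realType) (m n r : nat) (L : 'M[R]_(m, n))
  (WL : 'M[R]_(m, r)) (sL : 'rV[R]_r) (VL : 'M[R]_(n, r))
  (Ld : 'M[R]_(n, m)) (mu1 mu2 : R) (J : {set 'I_n})
  (k : nat) (WC : 'M[R]_(m, k)) (sC : 'rV[R]_k) (VC : 'M[R]_(#|J|, k))
  (Cd : 'M[R]_(#|J|, m)) :
  \rank L = r ->
  compact_svd L WL sL VL ->
  (forall i : 'I_m, norm2 (WL^T *m evec i) <= Num.sqrt (mu1 * r%:R / m%:R)) ->
  (forall i : 'I_n, norm2 (VL^T *m evec i) <= Num.sqrt (mu2 * r%:R / n%:R)) ->
  is_pinv L Ld ->
  compact_svd (colsubset L J) WC sC VC ->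
  is_pinv (colsubset L J) Cd ->
  forall i : 'I_#|J|,
    norm2 (VC^T *m evec i) <=
      kappa L Ld * (specnorm Cd / specnorm Ld) * Num.sqrt (mu2 * r%:R / n%:R).
Proof.
move=> _ [_ VtVL _ _ Leq] _ HV [LLdL _ _ _] [WtW VtV spos _ Ceq] [CCdC _ _ sym2] i.
set C := colsubset L J in Ceq CCdC sym2 *.
set s := Num.sqrt (mu2 * r%:R / n%:R).
set j := enum_val i.
have Cei : C *m evec i = L *m evec j.
  by rewrite /evec -!colE /C /colsubset col_colsub.
set X := VC *m diag_mx (\row_a (sC 0 a)^-1) *m WC^T.
have XC : X *m C = VC *m VC^T.
  rewrite /X Ceq !mulmxA -(mulmxA (VC *m _) WC^T WC) WtW mulmx1.
  rewrite -(mulmxA VC) mulmx_diag.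
  have -> : diag_mx (\row_a ((\row_a (sC 0 a)^-1) 0 a * sC 0 a)) = 1%:M :> 'M[R]_k.
    apply/matrixP => a b; rewrite !mxE; case: eqP => // _.
    by rewrite mulVf // gt_eqF.
  by rewrite mulmx1.
have CQ : C *m (VC *m VC^T) = C.
  by rewrite Ceq !mulmxA -(mulmxA (WC *m _) VC^T VC) VtV mulmx1.
have PQ : Cd *m C *m (VC *m VC^T) = Cd *m C by rewrite -mulmxA CQ.
have QP : VC *m VC^T *m (Cd *m C) = VC *m VC^T.
  by rewrite -XC -(mulmxA X) (mulmxA C) CCdC.
have QT : (VC *m VC^T)^T = VC *m VC^T by rewrite trmx_mul trmxK.
have PeQ : Cd *m C = VC *m VC^T.
  by rewrite -PQ -[Cd *m C *m _]trmxK trmx_mul QT sym2 QP QT.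
have H1 : norm2 (VC^T *m evec i) <= specnorm Cd * norm2 (L *m evec j).
  rewrite -(norm2_iso _ VtV) mulmxA -PeQ -mulmxA Cei.
  exact: specnorm_ub.
have LVV : L *m VL *m VL^T = L.
  by rewrite Leq -(mulmxA (WL *m _) VL^T VL) VtVL mulmx1.
have H2 : norm2 (L *m evec j) <= specnorm L * s.
  rewrite -{1}LVV -!mulmxA.
  apply: le_trans (specnorm_ub _ _) _.
  rewrite (norm2_iso _ VtVL); apply: ler_wpM2l; [exact: specnorm_ge0 | exact: HV].
have [Ld0|Ldnz] := eqVneq (specnorm Ld) 0.
  have H3 : norm2 (L *m evec j) <= 0.
    rewrite -LLdL -!mulmxA.
    apply: le_trans (specnorm_ub _ _) _.
    rewrite mulr_ge0_le0 ?specnorm_ge0 //.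
    apply: le_trans (specnorm_ub _ _) _.
    by rewrite Ld0 mul0r.
  rewrite Ld0 invr0 mulr0 mulr0 mul0r.
  apply: le_trans H1 _.
  by rewrite mulr_ge0_le0 ?specnorm_ge0.
have -> : kappa L Ld * (specnorm Cd / specnorm Ld) = specnorm Cd * specnorm L.
  by rewrite /kappa [specnorm Cd / _]mulrC mulrA -(mulrA (specnorm L)) mulfV // mulr1 mulrC.
apply: le_trans H1 _.
rewrite -mulrA; apply: ler_wpM2l; [exact: specnorm_ge0 | exact: H2].
Qed.
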